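(* With the setup in the context, fix $X\subseteq E\setminus B$ and $Y\subseteq E$. Suppose the message $\mathbf{m}\in A^{E\setminus B}$ is chosen uniformly at random, and the transmitted word $\mathbf{w}\in C_{\mathbf{m}}$ is then chosen uniformly at random; let $\mathbf{M}=\mathbf{m}_X$ and $\mathbf{t}=\mathbf{w}_Y$. Then the conditional entropy (with logarithms to base $|A|$) $H(\mathbf{m}\mid\mathbf{t},\mathbf{M})=\sum_{\mathbf{M}\in A^X,\mathbf{t}\in A^Y}p(\mathbf{M},\mathbf{t})\sum_{\mathbf{m}\in A^{E\setminus B}}p(\mathbf{m}\mid\mathbf{t},\mathbf{M})\log_{|A|}\frac{1}{p(\mathbf{m}\mid\mathbf{t},\mathbf{M})}$ (with $0\log\frac10=0$) equals $n-k-|X|-\rho_X(Y)$.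
   Context: An almost affine code over a finite alphabet $A$ of length $n$ and dimension $k$ is a subset $C\subseteq A^n$ with $|C|=|A|^k$ such that for every $X\subseteq E=\{1,\dots,n\}$, $\log_{|A|}|C_X|$ is a nonnegative integer ($C_X$ = projection onto coordinates $X$); its associated matroid $M_C$ has rank function $r(X)=\log_{|A|}|C_X|$. Setup: $C$ is an almost affine code of length $n$ and dimension $k$ over $A$ with matroid rank function $r$; $B\subseteq E$ is a basis of $M_C$; $\varphi:A\times A\to A$ is such that for every $y\in A$ both $\varphi(y,\cdot)$ and $\varphi(\cdot,y)$ are bijections. For $\mathbf{m}\in A^{E\setminus B}$, $\Phi_{\mathbf{m}}(\mathbf{w})_i=\mathbf{w}_i$ for $i\in B$ and $=\varphi(\mathbf{w}_i,\mathbf{m}_i)$ for $i\in E\setminus B$, and $C_{\mathbf{m}}=\Phi_{\mathbf{m}}(C)$. For $X\subseteq E\setminus B$ and $\mathbf{M}\in A^X$, $D_{X,\mathbf{M}}=\bigcup_{\mathbf{m}_X=\mathbf{M}}C_{\mathbf{m}}$, an almost affine code with rank function $r_D(Y)=|Y\setminus(B\cup X)|+r(Y\cap(B\cup X))$ (independent of $\mathbf{M}$), and $\rho_X(Y)=r_D(Y)-r(Y)$. *)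

(* Defs.v *)
From Stdlib Require Import Reals.
From HB Require Import structures.
From mathcomp Require Import all_boot.

Set Implicit Arguments.
Unset Strict Implicit.
Unset Printing Implicit Defensive.

(* Words of length n over A are {ffun 'I_n -> A}; E = 'I_n.
   Partial words (elements of A^X for X a subset of E) are encoded as
   {ffun 'I_n -> option A} which are Some exactly on X. *)

Definition pword (A : finType) (n : nat) := {ffun 'I_n -> option A}.

Definition restr (A : finType) n (X : {set 'I_n}) (w : {ffun 'I_n -> A})
  : pword A n := [ffun i => if i \in X then Some (w i) else None].

Definition restrp (A : finType) n (X : {set 'I_n}) (m : pword A n)
  : pword A n := [ffun i => if i \in X then m i else None].

Definition on_support (A : finType) n (X : {set 'I_n}) (m : pword A n) : bool :=
  [forall i, (m i != None) == (i \in X)].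

Definition proj (A : finType) n (C : {set {ffun 'I_n -> A}}) (X : {set 'I_n})
  : {set pword A n} := [set restr X w | w in C].

Definition almost_affine (A : finType) n (k : nat) (C : {set {ffun 'I_n -> A}}) :=
  #|C| = #|A| ^ k /\ forall X : {set 'I_n}, exists r : nat, #|proj C X| = #|A| ^ r.

(* rank function r(X) = log_{|A|} |C_X| (exact for almost affine codes) *)
Definition rk (A : finType) n (C : {set {ffun 'I_n -> A}}) (X : {set 'I_n}) : nat :=
  trunc_log #|A| #|proj C X|.

Definition is_basis (A : finType) n (C : {set {ffun 'I_n -> A}}) (B : {set 'I_n}) :=
  rk C B = #|B| /\ rk C B = rk C setT.

Definition Phi (A : finType) n (phi : A -> A -> A) (m : pword A n) (w : {ffun 'I_n -> A})
  : {ffun 'I_n -> A} :=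
  [ffun i => match m i with Some a => phi (w i) a | None => w i end].

Definition Cm (A : finType) n (phi : A -> A -> A) (C : {set {ffun 'I_n -> A}}) (m : pword A n)
  : {set {ffun 'I_n -> A}} := [set Phi phi m w | w in C].

Definition messages (A : finType) n (B : {set 'I_n}) : {set pword A n} :=
  [set m | on_support (~: B) m].

Definition pjoint (A : finType) n (phi : A -> A -> A) (C : {set {ffun 'I_n -> A}})
  (B : {set 'I_n}) (m : pword A n) (w : {ffun 'I_n -> A}) : R :=
  if (m \in messages A B) && (w \in Cm phi C m)
  then Rmult (Rinv (INR #|messages A B|)) (Rinv (INR #|Cm phi C m|)) else R0.

Definition pMt (A : finType) n phi C (B X Y : {set 'I_n}) (M t : pword A n) : R :=
  \big[Rplus/R0]_(m : pword A n) \big[Rplus/R0]_(w : {ffun 'I_n -> A})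
     (if (restrp X m == M) && (restr Y w == t) then pjoint phi C B m w else R0).

Definition pmMt (A : finType) n phi C (B X Y : {set 'I_n}) (m M t : pword A n) : R :=
  \big[Rplus/R0]_(w : {ffun 'I_n -> A})
     (if (restrp X m == M) && (restr Y w == t) then pjoint phi C B m w else R0).

(* p(m | t, M) (set to 0 when p(M,t) = 0; such terms carry weight 0) *)
Definition pcond (A : finType) n phi C (B X Y : {set 'I_n}) (m M t : pword A n) : R :=
  if Req_EM_T (pMt phi C B X Y M t) R0 then R0
  else Rdiv (pmMt phi C B X Y m M t) (pMt phi C B X Y M t).

Definition xlog1x (base : nat) (q : R) : R :=
  if Req_EM_T q R0 then R0 else Rmult q (Rdiv (ln (Rinv q)) (ln (INR base))).

Definition cond_entropy (A : finType) n phi C (B X Y : {set 'I_n}) : R :=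
  \big[Rplus/R0]_(M : pword A n | on_support X M)
   \big[Rplus/R0]_(t : pword A n | on_support Y t)
     (Rmult (pMt phi C B X Y M t)
      (\big[Rplus/R0]_(m : pword A n | m \in messages A B)
         xlog1x #|A| (pcond phi C B X Y m M t))).

Definition rD (A : finType) n (C : {set {ffun 'I_n -> A}}) (B X Y : {set 'I_n}) : nat :=
  #|Y :\: (B :|: X)| + rk C (Y :&: (B :|: X)).

Definition rho (A : finType) n (C : {set {ffun 'I_n -> A}}) (B X Y : {set 'I_n}) : R :=
  Rminus (INR (rD C B X Y)) (INR (rk C Y)).

(* Main.v *)
Require Import Defs.
From Stdlib Require Import Reals Lra.
From HB Require Import structures.
From mathcomp Require Import all_boot all_algebra.
From mathcomp Require Import Rstruct zify.

Set Implicit Arguments.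
Unset Strict Implicit.
Unset Printing Implicit Defensive.


Section Comb.
Variables (A : finType) (n : nat).
Notation word := {ffun 'I_n -> A}.
Notation pw := (pword A n).

Definition fam (F : 'I_n -> {set option A}) : {set pw} :=
  [set m : pw | [forall i, m i \in F i]].

Lemma card_fam F : #|fam F| = \prod_i #|F i|.
Proof.
rewrite /fam.
have -> : #|[set m : pw | [forall i, m i \in F i]]| =
          #|(family (fun i => mem (F i)) : simpl_pred pw)|.
  apply: eq_card => m; rewrite inE; apply/forallP/familyP => H i; exact: H.
rewrite card_family foldrE big_map.
by rewrite /index_enum /= enumT.
Qed.

Lemma prod_if (S : {set 'I_n}) (q : nat) (f : 'I_n -> nat) :
  (forall i, f i = if i \in S then q else 1) -> \prod_i f i = q ^ #|S|.
Proof.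
move=> Hf; rewrite -prod_nat_const [RHS]big_mkcond /=.
by apply: eq_bigr => i _; rewrite Hf.
Qed.

Lemma card_Some (D : {set A}) : #|[set Some x | x in D]| = #|D|.
Proof. by apply: card_imset => x y [->]. Qed.

Lemma restr_eqP (X : {set 'I_n}) (w w' : word) :
  reflect (forall i, i \in X -> w i = w' i) (restr X w == restr X w').
Proof.
apply: (iffP eqP) => [H i iX | H].
  by move/ffunP: H => /(_ i); rewrite !ffunE iX => -[].
by apply/ffunP => i; rewrite !ffunE; case: ifP => // /H ->.
Qed.

Lemma restrp_restr (I J : {set 'I_n}) (w : word) :
  I \subset J -> restrp I (restr J w) = restr I w.
Proof.
move=> sIJ; apply/ffunP => i; rewrite !ffunE.
by case: ifP => // iI; rewrite (subsetP sIJ _ iI).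
Qed.

Lemma card_onsupp (I : {set 'I_n}) :
  #|fam (fun i => if i \in I then [set Some x | x in [set: A]] else [set None])|
  = #|A| ^ #|I|.
Proof.
rewrite card_fam; apply: prod_if => i; case: ifP => _.
  by rewrite card_Some cardsT.
by rewrite cards1.
Qed.

Variable C : {set word}.

Lemma proj_sub_fam (I : {set 'I_n}) :
  proj C I \subset fam (fun i => if i \in I then [set Some x | x in [set: A]] else [set None]).
Proof.
apply/subsetP => v /imsetP [w _ ->]; rewrite inE; apply/forallP => i.
rewrite ffunE; case: ifP => _; last by rewrite inE.
by apply: imset_f; rewrite inE.
Qed.

Lemma card_proj_le (I : {set 'I_n}) : #|proj C I| <= #|A| ^ #|I|.
Proof. by rewrite -card_onsupp; apply: subset_leq_card; apply: proj_sub_fam. Qed.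

Lemma proj_restrp (I J : {set 'I_n}) : I \subset J -> proj C I = restrp I @: proj C J.
Proof.
move=> sIJ; apply/setP => v; apply/imsetP/imsetP => [[w wC ->]|[u /imsetP [w wC ->] ->]].
  by exists (restr J w); [apply: imset_f | rewrite restrp_restr].
by exists w; rewrite // restrp_restr.
Qed.

Lemma card_proj_sub (I J : {set 'I_n}) : I \subset J -> #|proj C I| <= #|proj C J|.
Proof. by move=> sIJ; rewrite (proj_restrp sIJ) leq_imset_card. Qed.

Lemma card_proj_add (I : {set 'I_n}) (j : 'I_n) (w0 : word) : w0 \in C ->
  #|proj C (j |: I)| <= #|proj C I| * #|A|.
Proof.
move=> w0C.
pose f (v : pw) := (restrp I v, odflt (w0 j) (v j)).
have finj : {in proj C (j |: I) &, injective f}.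
  move=> v v' /imsetP [w wC ->] /imsetP [w' w'C ->] [e1 e2].
  rewrite !restrp_restr ?subsetUr // in e1.
  apply/eqP/restr_eqP => i; rewrite !inE => /orP [/eqP -> | iI].
    by move: e2; rewrite !ffunE !inE eqxx.
  by move/eqP/restr_eqP: e1; apply.
rewrite -(card_in_imset finj) -(cardsT A) -cardsX.
apply: subset_leq_card; apply/subsetP => p /imsetP [v vP ->].
rewrite inE /= inE andbT (proj_restrp (subsetUr [set j] I)).
by apply: imset_f.
Qed.

Lemma det_of_eq (I J : {set 'I_n}) : I \subset J -> #|proj C I| = #|proj C J| ->
  forall w w', w \in C -> w' \in C -> restr I w = restr I w' -> restr J w = restr J w'.
Proof.
move=> sIJ e w w' wC w'C eI.
have : {in proj C J &, injective (restrp I)}.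
  by apply/imset_injP; rewrite -proj_restrp // e.
apply; try exact: imset_f.
by rewrite !restrp_restr.
Qed.


Lemma maxfull_det k (Y I : {set 'I_n}) : 1 < #|A| -> almost_affine k C ->
  maxset [pred J : {set 'I_n} | (#|proj C J| == #|A| ^ #|J|) && (J \subset Y)] I ->
  forall w w', w \in C -> w' \in C -> restr I w = restr I w' -> restr Y w = restr Y w'.
Proof.
move=> q1 [CK aa] mI w w' wC w'C eI.
have /andP [/eqP fI sIY] := maxsetp mI.
apply/eqP/restr_eqP => j jY.
case: (boolP (j \in I)) => jI.
  by move/eqP/restr_eqP: eI; apply.
set J := j |: I.
have sIJ : I \subset J by apply: subsetUr.
have cJ : #|J| = #|I|.+1 by rewrite cardsU1 jI.
have [r er] := aa J.
have le1 : #|proj C I| <= #|proj C J| := card_proj_sub sIJ.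
have le2 : #|proj C J| <= #|proj C I| * #|A| := card_proj_add I j wC.
rewrite er fI -expnSr in le2; rewrite er fI in le1.
rewrite leq_exp2l // in le1; rewrite leq_exp2l // in le2.
case: (ltngtP r #|I|.+1) => hr.
- have hr' : r = #|I| by apply/eqP; rewrite eqn_leq le1 -ltnS hr.
  have eIJ : #|proj C I| = #|proj C J| by rewrite er fI hr'.
  have := det_of_eq sIJ eIJ wC w'C eI.
  by move/eqP/restr_eqP; apply; rewrite !inE eqxx.
- by move: le2; rewrite leqNgt hr.
- have PJ : [pred J : {set 'I_n} | (#|proj C J| == #|A| ^ #|J|) && (J \subset Y)] J.
    by rewrite /= er hr cJ eqxx subUset sub1set jY sIY.
  have eJI := maxsetsup mI PJ sIJ.
  by move: jI; rewrite -eJI !inE eqxx.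
Qed.

Lemma fiber k (Y : {set 'I_n}) (w0 : word) : 1 < #|A| -> almost_affine k C -> w0 \in C ->
  rk C Y <= k /\ #|[set w in C | restr Y w == restr Y w0]| = #|A| ^ (k - rk C Y).
Proof.
move=> q1 Haa w0C; have [CK aa] := Haa.
set P := [pred J : {set 'I_n} | (#|proj C J| == #|A| ^ #|J|) && (J \subset Y)].
have P0 : P set0.
  rewrite /= sub0set andbT cards0 expn0.
  apply/cards1P; exists (restr set0 w0); apply/setP => v; rewrite inE.
  apply/imsetP/eqP => [[w _ ->]|->]; last by exists w0.
  by apply/ffunP => i; rewrite !ffunE inE.
have [I mI _] := maxset_exists P0.
have /andP [/eqP fI sIY] := maxsetp mI.
have detI := maxfull_det q1 Haa mI.
set P' := [pred J : {set 'I_n} | (#|proj C J| == #|A| ^ #|J|) && (J \subset setT)].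
have PI : P' I by rewrite /= fI eqxx subsetT.
have [J mJ sIJ] := maxset_exists PI.
have /andP [/eqP fJ _] := maxsetp mJ.
have detJ := maxfull_det q1 Haa mJ.
have injJ : {in C &, injective (restr J)}.
  move=> w w' wC w'C e; have := detJ w w' wC w'C e.
  move/eqP/restr_eqP => H; apply/ffunP => i; apply: H; exact: in_setT.
have cJ : #|proj C J| = #|C| by apply: card_in_imset.
have kJ : #|J| = k by apply/eqP; rewrite -(eqn_exp2l _ _ q1) -fJ cJ CK.
have eYI : #|proj C Y| = #|proj C I|.
  rewrite (proj_restrp sIY); apply/esym/eqP/imset_injP.
  move=> v v' /imsetP [w wC ->] /imsetP [w' w'C ->]; rewrite !restrp_restr // => e.
  by apply: detI.
have rY : rk C Y = #|I| by rewrite /rk eYI fI trunc_expnK.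
split; first by rewrite rY -kJ subset_leq_card.
have -> : [set w in C | restr Y w == restr Y w0] = [set w in C | restr I w == restr I w0].
  apply/setP => w; rewrite !inE; case wC: (w \in C) => //=.
  apply/idP/idP => /eqP e.
    by apply/eqP; rewrite -(restrp_restr w sIY) -(restrp_restr w0 sIY) e.
  by apply/eqP; apply: detI.
have injD : {in [set w in C | restr I w == restr I w0] &, injective (restr J)}.
  by move=> x y; rewrite !inE => /andP [xC _] /andP [yC _]; apply: injJ.
rewrite -(card_in_imset injD).
set F := fun i => if i \in I then [set Some (w0 i)]
                  else if i \in J then [set Some x | x in [set: A]] else [set None].
have ePJ : proj C J = fam (fun i => if i \in J then [set Some x | x in [set: A]] else [set None]).
  by apply/eqP; rewrite eqEcard proj_sub_fam card_onsupp fJ leqnn.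
have -> : restr J @: [set w in C | restr I w == restr I w0] = fam F.
  apply/setP => v; apply/imsetP/idP.
    move=> [w]; rewrite inE => /andP [wC /eqP /eqP /restr_eqP eI] ->.
    rewrite inE; apply/forallP => i; rewrite ffunE /F.
    case: (boolP (i \in I)) => iI.
      by rewrite (subsetP sIJ _ iI) eI // inE.
    by case: (boolP (i \in J)) => _; [apply: imset_f; rewrite inE | rewrite inE].
  move=> vF.
  have : v \in proj C J.
    rewrite ePJ inE; apply/forallP => i; move: vF; rewrite inE => /forallP /(_ i).
    rewrite /F; case: ifP => iI; last by [].
    by rewrite (subsetP sIJ _ iI) inE => /eqP ->; apply: imset_f; rewrite inE.
  move=> /imsetP [w wC ev]; exists w => //; rewrite inE wC /=.
  apply/restr_eqP => i iI.
  move: vF; rewrite inE => /forallP /(_ i); rewrite /F iI ev ffunE (subsetP sIJ _ iI).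
  by rewrite inE => /eqP [].
rewrite card_fam (prod_if (S := J :\: I) (q := #|A|)).
  by rewrite cardsD (setIidPr sIJ) kJ rY.
move=> i; rewrite /F !inE; case: ifP => iI /=; first by rewrite cards1.
by case: ifP => _; [rewrite card_Some cardsT | rewrite cards1].
Qed.

End Comb.


Lemma card_sep (T : finType) (D : {set T}) (P : pred T) :
  #|[set x in D | P x]| = \sum_(x in D) P x.
Proof.
rewrite -sum1_card [LHS]big_mkcond [RHS]big_mkcond; apply: eq_bigr => x _.
by rewrite inE; case: (x \in D); case: (P x).
Qed.

Lemma sum_bool (T : finType) (P : pred T) : \sum_x (P x : nat) = #|P|.
Proof.
rewrite -sum1_card [RHS]big_mkcond; apply: eq_bigr => x _.
by rewrite unfold_in; case: (P x).
Qed.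

Lemma sum_fiber (T U : finType) (D : {set T}) (P : pred U) (f : T -> U) :
  (forall x, x \in D -> P (f x)) -> \sum_(u | P u) #|[set x in D | f x == u]| = #|D|.
Proof.
move=> H; under eq_bigr do rewrite card_sep.
rewrite exchange_big /= -sum1_card; apply: eq_bigr => x xD.
rewrite (bigD1 (f x)) ?H //= eqxx big1 ?addn0 // => u /andP [_ ne].
by rewrite eq_sym (negbTE ne).
Qed.

Section Main.
Variables (A : finType) (n k : nat) (C : {set {ffun 'I_n -> A}})
  (B : {set 'I_n}) (phi : A -> A -> A) (X Y : {set 'I_n}).
Hypotheses (q1 : 1 < #|A|) (Haa : almost_affine k C) (Hbas : is_basis C B)
  (Hphi1 : forall y : A, bijective (phi y))
  (Hphi2 : forall y : A, bijective (fun x => phi x y))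
  (sXB : X \subset ~: B).
Notation word := {ffun 'I_n -> A}.
Notation pw := (pword A n).

Lemma PhiE (m : pw) (c : word) i :
  Phi phi m c i = match m i with Some a => phi (c i) a | None => c i end.
Proof. by rewrite ffunE. Qed.

Lemma PhiI (m : pw) (c c' : word) i : (Phi phi m c i == Phi phi m c' i) = (c i == c' i).
Proof.
rewrite !PhiE; case: (m i) => [a|] //.
by apply/eqP/eqP => [|-> //]; apply: (bij_inj (Hphi2 a)).
Qed.

Lemma Phi_inj (m : pw) : injective (Phi phi m).
Proof. by move=> c c' e; apply/ffunP => i; apply/eqP; rewrite -(PhiI m) e. Qed.

Lemma restr_Phi (Z : {set 'I_n}) (m : pw) (c c' : word) :
  (restr Z (Phi phi m c) == restr Z (Phi phi m c')) = (restr Z c == restr Z c').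
Proof.
by apply/restr_eqP/restr_eqP => H i iZ; apply/eqP; [rewrite -(PhiI m) | rewrite (PhiI m)]; apply/eqP; apply: H.
Qed.

Lemma card_Cm (m : pw) : #|Cm phi C m| = #|C|.
Proof. by apply: card_imset; apply: Phi_inj. Qed.

Lemma C_gt0 : 0 < #|C|.
Proof. by case: Haa => -> _; rewrite expn_gt0 (ltnW q1). Qed.

Lemma card_B : #|B| = k.
Proof.
case: Hbas => <- ->; case: Haa => CK _; rewrite /rk.
have -> : #|proj C setT| = #|C|.
  apply: card_in_imset => w w' _ _ /eqP /restr_eqP H.
  by apply/ffunP => i; apply: H; rewrite inE.
by rewrite CK trunc_expnK.
Qed.

Lemma onsuppP (S : {set 'I_n}) (m : pw) :
  reflect (forall i, (m i == None) = (i \notin S)) (on_support S m).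
Proof.
apply: (iffP forallP) => H i; last by rewrite H negbK.
by have := H i; case: (m i) => [a|] /eqP <-.
Qed.

Lemma messages_fam :
  messages A B = fam (fun i => if i \in B then [set None] else [set Some x | x in [set: A]]).
Proof.
apply/setP => m; rewrite !inE; apply/onsuppP/forallP => H i.
  have := H i; rewrite inE; case: (m i) => [a|]; case: (i \in B) => //= _.
    by apply: imset_f; rewrite inE.
  by rewrite inE.
have := H i; rewrite inE; case: (m i) => [a|]; case: (i \in B) => //=.
  by rewrite inE.
by move=> /imsetP [? _].
Qed.

Lemma card_messages : #|messages A B| = #|A| ^ #|~: B|.
Proof.
rewrite messages_fam card_fam; apply: prod_if => i; rewrite inE.
by case: (i \in B) => /=; rewrite ?cards1 ?card_Some ?cardsT.
Qed.


Definition cnt1 (m M t : pw) : nat :=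
  if (m \in messages A B) && (restrp X m == M)
  then #|[set c in C | restr Y (Phi phi m c) == t]| else 0.

Lemma cnt1_val m M t : cnt1 m M t = 0 \/ cnt1 m M t = #|A| ^ (k - rk C Y).
Proof.
rewrite /cnt1; case: ifP => _; last by left.
case: (set_0Vmem [set c in C | restr Y (Phi phi m c) == t]) => [->|[c0]].
  by left; rewrite cards0.
rewrite inE => /andP [c0C /eqP et].
right; have [_ <-] := fiber Y q1 Haa c0C.
by apply: eq_card => c; rewrite !inE -et restr_Phi.
Qed.

Definition condc (M t : pw) (c : word) : bool :=
  [forall i in Y :&: (B :|: X), Some (Phi phi M c i) == t i].

Definition Sset := ~: (Y :|: (B :|: X)).

Definition Fc (M t : pw) (c : word) (i : 'I_n) : {set option A} :=
  if i \in B then [set None] else if i \in X then [set M i]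
  else if i \in Y then [set Some b | b in [set b | Some (phi (c i) b) == t i]]
  else [set Some x | x in [set: A]].

Lemma notXB i : i \in B -> i \notin X.
Proof. by move=> iB; apply/negP => /(subsetP sXB); rewrite inE iB. Qed.

Lemma card_Fc M t c : on_support Y t -> #|fam (Fc M t c)| = #|A| ^ #|Sset|.
Proof.
move=> /onsuppP tY; rewrite card_fam; apply: prod_if => i; rewrite /Fc /Sset !inE.
case: (boolP (i \in B)) => iB; first by rewrite orbT cards1.
case: (boolP (i \in X)) => iX; first by rewrite !orbT cards1.
case: (boolP (i \in Y)) => iY /=; last by rewrite card_Some cardsT.
have := tY i; rewrite iY; case E: (t i) => [s|] // _.
have -> : [set b | Some (phi (c i) b) == Some s] = phi (c i) @^-1: [set s].
  by apply/setP => b; rewrite !inE.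
by rewrite card_Some card_preimset ?cards1 //; apply: bij_inj.
Qed.

Lemma memb_m M t c m : on_support X M -> on_support Y t ->
  [&& m \in messages A B, restrp X m == M & restr Y (Phi phi m c) == t]
  = condc M t c && (m \in fam (Fc M t c)).
Proof.
move=> /onsuppP MX /onsuppP tY.
have HMB i : i \in B -> M i = None by move=> iB; apply/eqP; rewrite MX notXB.
apply/idP/idP.
- rewrite inE; case/and3P => /onsuppP Hm /eqP HM /eqP Ht.
  have HmX i : i \in X -> m i = M i by move=> iX; rewrite -HM ffunE iX.
  have HmB i : i \in B -> m i = None by move=> iB; apply/eqP; rewrite Hm !inE iB.
  have Hti i : i \in Y -> t i = Some (Phi phi m c i) by move=> iY; rewrite -Ht ffunE iY.
  apply/andP; split.
    apply/forallP => i; apply/implyP; rewrite !inE => /andP [iY /orP [iB|iX]];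
      rewrite (Hti _ iY) !PhiE.
      by rewrite HmB // HMB.
    by rewrite HmX.
  rewrite inE; apply/forallP => i; rewrite /Fc.
  case: (boolP (i \in B)) => iB; first by rewrite HmB // inE.
  case: (boolP (i \in X)) => iX; first by rewrite HmX // inE.
  have : m i != None by rewrite Hm inE iB.
  case E: (m i) => [b|] // _.
  case: (boolP (i \in Y)) => iY.
    by apply: imset_f; rewrite inE (Hti _ iY) PhiE E.
  by apply: imset_f; rewrite inE.
- case/andP => /forallP Hc; rewrite inE => /forallP Hf.
  have HmB i : i \in B -> m i = None.
    by move=> iB; move: (Hf i); rewrite /Fc iB inE => /eqP.
  have HmX i : i \in X -> m i = M i.
    move=> iX; have iB : i \notin B by apply/negP => /notXB; rewrite iX.
    by move: (Hf i); rewrite /Fc (negbTE iB) iX inE => /eqP.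
  have HmO i : i \notin B -> i \notin X -> exists b, m i = Some b /\
      (i \in Y -> Some (phi (c i) b) == t i).
    move=> iB iX; move: (Hf i); rewrite /Fc (negbTE iB) (negbTE iX).
    case: ifP => iY /imsetP [b]; rewrite ?inE => Hb ->.
      by exists b; split.
    by exists b; split => // iY'; move: iY; rewrite iY'.
  apply/and3P; split.
  + rewrite inE; apply/onsuppP => i; rewrite inE negbK.
    case: (boolP (i \in B)) => iB; first by rewrite HmB.
    case: (boolP (i \in X)) => iX; first by rewrite HmX // MX iX.
    by have [b [-> _]] := HmO i iB iX.
  + apply/eqP/ffunP => i; rewrite ffunE; case: ifP => iX; first by rewrite HmX.
    by apply/esym/eqP; rewrite MX iX.
  + apply/eqP/ffunP => i; rewrite ffunE; case: (boolP (i \in Y)) => iY; last first.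
      by apply/esym/eqP; rewrite tY iY.
    case: (boolP (i \in B)) => iB.
      have := Hc i; rewrite !inE iY iB /= !PhiE HMB // HmB // => /eqP.
      by [].
    case: (boolP (i \in X)) => iX.
      by have := Hc i; rewrite !inE iY iX orbT /= !PhiE HmX // => /eqP.
    have [b [Eb Hb]] := HmO i iB iX.
    by rewrite PhiE Eb; apply/eqP; apply: Hb.
Qed.

Definition Tc (M t : pw) : nat := \sum_(m : pw) cnt1 m M t.

Lemma Tc_eq M t : on_support X M -> on_support Y t ->
  Tc M t = #|[set c in C | condc M t c]| * #|A| ^ #|Sset|.
Proof.
move=> MX tY; rewrite /Tc.
have e1 m : cnt1 m M t = \sum_(c in C)
    [&& m \in messages A B, restrp X m == M & restr Y (Phi phi m c) == t].
  rewrite /cnt1; case: ifP => H.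
    by rewrite card_sep; case/andP: H => -> ->.
  by rewrite big1 // => c _; rewrite andbA H.
rewrite (eq_bigr _ (fun m _ => e1 m)) exchange_big /=.
rewrite card_sep big_distrl /=; apply: eq_bigr => c cC.
under eq_bigr do rewrite memb_m //.
case: (condc M t c) => /=; last by rewrite big1.
by rewrite mul1n sum_bool card_Fc.
Qed.

Lemma Tc_val M t : on_support X M -> on_support Y t ->
  Tc M t = 0 \/ Tc M t = #|A| ^ (k - rk C (Y :&: (B :|: X))) * #|A| ^ #|Sset|.
Proof.
move=> MX tY; rewrite Tc_eq //.
case: (set_0Vmem [set c in C | condc M t c]) => [->|[c0]].
  by left; rewrite cards0.
rewrite inE => /andP [c0C /forallP H0].
have H0' i : i \in Y :&: (B :|: X) -> t i = Some (Phi phi M c0 i).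
  by move=> iZ; move: (H0 i); rewrite iZ /= => /eqP <-.
right; have [_ <-] := fiber (Y :&: (B :|: X)) q1 Haa c0C.
congr (_ * _); apply: eq_card => c; rewrite !inE; case: (c \in C) => //=.
apply/forallP/restr_eqP => H i.
  move=> iZ; have := H i; rewrite iZ H0' //= => /eqP [] /eqP.
  by rewrite PhiI => /eqP.
apply/implyP => iZ; rewrite H0' //=; apply/eqP; congr Some; apply/eqP.
by rewrite PhiI; apply/eqP; apply: H.
Qed.

Lemma restrp_on (m : pw) : m \in messages A B -> on_support X (restrp X m).
Proof.
rewrite inE => /onsuppP Hm; apply/onsuppP => i; rewrite ffunE.
case: ifP => iX //=.
rewrite Hm inE negbK; apply/negP => iB; move: (notXB iB); rewrite iX.
by [].
Qed.

Lemma restr_on (Z : {set 'I_n}) (w : word) : on_support Z (restr Z w).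
Proof. by apply/onsuppP => i; rewrite ffunE; case: ifP. Qed.

Lemma sum_Tc : \sum_(M | on_support X M) \sum_(t | on_support Y t) Tc M t
  = #|messages A B| * #|C|.
Proof.
rewrite /Tc; under eq_bigr do rewrite exchange_big /=.
rewrite exchange_big /= -[#|messages A B|]sum1_card big_distrl /= [RHS]big_mkcond /=.
apply: eq_bigr => m _.
case: (boolP (m \in messages A B)) => mM; last first.
  by rewrite big1 // => M _; rewrite big1 // => t _; rewrite /cnt1 (negbTE mM).
rewrite ?mul1n (bigD1 (restrp X m)) ?restrp_on //=.
rewrite [X in _ + X]big1 ?addn0; last first.
  move=> M /andP [_ ne]; apply: big1 => t _.
  by rewrite /cnt1 mM eq_sym (negbTE ne).
under eq_bigr do rewrite /cnt1 mM eqxx /=.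
by apply: sum_fiber => c _; apply: restr_on.
Qed.

End Main.


Section RealAll.
Local Open Scope R_scope.

Lemma INR_sum (I : finType) (P : pred I) (f : I -> nat) :
  INR (\sum_(i | P i) f i)%N = \big[Rplus/R0]_(i | P i) INR (f i).
Proof. by apply: (big_morph INR plus_INR). Qed.

Lemma INR_expn (m e : nat) : INR (m ^ e)%N = INR m ^ e.
Proof. by elim: e => //= e IH; rewrite expnS mult_INR IH. Qed.

Lemma INR_addn (a b : nat) : INR (addn a b) = INR a + INR b.
Proof. exact: plus_INR. Qed.

Lemma sumR_const (I : finType) (S : pred I) (v : R) :
  \big[Rplus/R0]_(i in S) v = INR #|S| * v.
Proof.
rewrite -sum1_card INR_sum big_distrl /=; apply: eq_bigr => i _.
by rewrite Rmult_1_l.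
Qed.

Section Real.
Variables (A : finType) (n k : nat) (C : {set {ffun 'I_n -> A}})
  (B : {set 'I_n}) (phi : A -> A -> A) (X Y : {set 'I_n}).
Hypotheses (q1 : (1 < #|A|)%N) (Haa : almost_affine k C) (Hbas : is_basis C B)
  (Hphi1 : forall y : A, bijective (phi y))
  (Hphi2 : forall y : A, bijective (fun x => phi x y))
  (sXB : X \subset ~: B).
Notation word := {ffun 'I_n -> A}.
Notation pw := (pword A n).

Let D := INR #|messages A B| * INR #|C|.

Lemma D_pos : 0 < D.
Proof.
rewrite /D; apply: Rmult_lt_0_compat; apply: lt_0_INR; apply/ltP.
  by rewrite card_messages expn_gt0 (ltnW q1).
exact: (C_gt0 q1 Haa).
Qed.

Lemma pmMt_eq (m M t : pw) :
  pmMt phi C B X Y m M t = INR (cnt1 C B phi X Y m M t) / D.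
Proof.
rewrite /pmMt /pjoint /cnt1.
case: (boolP ((m \in messages A B) && (restrp X m == M))) => H.
  have /andP [mM eM] := H; rewrite eM.
  transitivity (\big[Rplus/R0]_(w in [set w in Cm phi C m | restr Y w == t])
                 (/ INR #|messages A B| * / INR #|Cm phi C m|)).
    rewrite [RHS]big_mkcond; apply: eq_bigr => w _; rewrite inE mM /=.
    by case: (restr Y w == t); case: (w \in Cm phi C m).
  rewrite sumR_const (card_Cm C Hphi2).
  have -> : [set w in Cm phi C m | restr Y w == t] =
            Phi phi m @: [set c in C | restr Y (Phi phi m c) == t].
    apply/setP => w; rewrite inE; apply/andP/imsetP.
      by move=> [/imsetP [c cC ->] e]; exists c; rewrite // inE cC.
    by move=> [c]; rewrite inE => /andP [cC e] ->; split; [apply: imset_f|].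
  rewrite card_imset; last exact: (Phi_inj Hphi2).
  by rewrite /D /Rdiv Rinv_mult.
rewrite big1 /=; first by rewrite /Rdiv Rmult_0_l.
move=> w _; case eM: (restrp X m == M) => //=.
by move: H; rewrite eM andbT => /negbTE ->; case: ifP.
Qed.

Lemma pMt_eq (M t : pw) : pMt phi C B X Y M t = INR (Tc C B phi X Y M t) / D.
Proof.
have -> : pMt phi C B X Y M t = \big[Rplus/R0]_(m : pw) pmMt phi C B X Y m M t by [].
rewrite /Tc INR_sum /Rdiv big_distrl /=; apply: eq_bigr => m _.
by rewrite pmMt_eq.
Qed.


Let c1 := (#|A| ^ (k - rk C Y))%N.
Let T0 := (#|A| ^ (k - rk C (Y :&: (B :|: X))) * #|A| ^ #|Sset B X Y|)%N.
Let L := ln (INR T0 / INR c1) / ln (INR #|A|).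

Lemma pow_pos e : 0 < INR (#|A| ^ e)%N.
Proof. by apply: lt_0_INR; apply/ltP; rewrite expn_gt0 (ltnW q1). Qed.

Lemma T0_pos : 0 < INR T0.
Proof. rewrite /T0 mult_INR; apply: Rmult_lt_0_compat; apply: pow_pos. Qed.

Lemma c1_pos : 0 < INR c1.
Proof. exact: pow_pos. Qed.

Lemma pcond_eq (m M t : pw) : Tc C B phi X Y M t = T0 ->
  pcond phi C B X Y m M t = INR (cnt1 C B phi X Y m M t) / INR T0.
Proof.
move=> eT; have hD := D_pos; have hT := T0_pos.
rewrite /pcond; destruct (RIneq.Req_EM_T (pMt phi C B X Y M t) R0) as [h|h0]; cbn [is_left].
  exfalso; move: h; rewrite pMt_eq eT => h.
  have : 0 < INR T0 / D by apply: Rdiv_lt_0_compat.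
  lra.
rewrite pMt_eq pmMt_eq eT; field; lra.
Qed.

Lemma xlog_eq (m M t : pw) :
  xlog1x #|A| (INR (cnt1 C B phi X Y m M t) / INR T0)
  = INR (cnt1 C B phi X Y m M t) / INR T0 * L.
Proof.
have hT := T0_pos; have hc := c1_pos.
case: (cnt1_val B X Y q1 Haa Hphi2 m M t) => ->.
  have -> : INR 0 / INR T0 = 0 by rewrite /= /Rdiv Rmult_0_l.
  rewrite /xlog1x; destruct (RIneq.Req_EM_T 0 R0) as [h0|h]; cbn [is_left]; first by ring.
  by exfalso; apply: h.
rewrite /xlog1x; destruct (RIneq.Req_EM_T (INR (#|A| ^ (k - rk C Y)) / INR T0) R0) as [h|h0]; cbn [is_left].
  exfalso; have : 0 < INR c1 / INR T0 by apply: Rdiv_lt_0_compat.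
  rewrite /c1 in h *; lra.
by rewrite Rinv_div.
Qed.

Lemma term_eq (M t : pw) : on_support X M -> on_support Y t ->
  pMt phi C B X Y M t *
    \big[Rplus/R0]_(m | m \in messages A B) xlog1x #|A| (pcond phi C B X Y m M t)
  = pMt phi C B X Y M t * L.
Proof.
move=> MX tY.
case: (Tc_val q1 Haa Hphi1 Hphi2 sXB MX tY) => eT.
  by rewrite pMt_eq eT /= /Rdiv !Rmult_0_l.
congr (_ * _).
under eq_bigr => m _ do rewrite pcond_eq // xlog_eq.
rewrite /Rdiv -big_distrl -big_distrl /= -INR_sum.
have eS : (\sum_(m | m \in messages A B) cnt1 C B phi X Y m M t)%N = Tc C B phi X Y M t.
  rewrite /Tc [RHS](bigID (fun m => m \in messages A B)) /=.
  rewrite [X in _ = (_ + X)%N]big1 ?addn0 // => m /negbTE mM.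
  by rewrite /cnt1 mM.
rewrite eS eT; have hT := T0_pos; rewrite -/T0 Rinv_r; [ring | lra].
Qed.

Lemma sum_pMt : \big[Rplus/R0]_(M | on_support X M) \big[Rplus/R0]_(t | on_support Y t)
   pMt phi C B X Y M t = 1.
Proof.
transitivity (INR (\sum_(M | on_support X M) \sum_(t | on_support Y t)
    Tc C B phi X Y M t)%N / D).
  rewrite INR_sum /Rdiv big_distrl; apply: eq_bigr => M _.
  rewrite INR_sum big_distrl; apply: eq_bigr => t _.
  by rewrite pMt_eq.
have hD := D_pos.
rewrite sum_Tc // mult_INR -/D; field; lra.
Qed.

Lemma entropy_L : cond_entropy phi C B X Y = L.
Proof.
rewrite /cond_entropy.
transitivity (\big[Rplus/R0]_(M | on_support X M) \big[Rplus/R0]_(t | on_support Y t)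
   (pMt phi C B X Y M t * L)).
  apply: eq_bigr => M MX; apply: eq_bigr => t tY; exact: term_eq.
under eq_bigr do rewrite -big_distrl.
rewrite -big_distrl sum_pMt; exact: Rmult_1_l.
Qed.

Lemma L_val : L = INR n - INR k - INR #|X| - rho C B X Y.
Proof.
have /card_gt0P [w0 w0C] := C_gt0 q1 Haa.
have [rYZ _] := fiber (Y :&: (B :|: X)) q1 Haa w0C.
have [rY _] := fiber Y q1 Haa w0C.
have kB := card_B q1 Haa Hbas.
have ecard : (#|Sset B X Y| + #|Y :\: (B :|: X)| + #|B| + #|X|)%N = n.
  have h1 := cardsC (Y :|: (B :|: X)); rewrite card_ord in h1.
  have h2 := cardsUI Y (B :|: X).
  have h3 := cardsID (B :|: X) Y.
  have h4 := cardsUI B X.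
  have h5 : B :&: X = set0.
    by apply/setP => i; rewrite !inE; case: (boolP (i \in B)) => // /(notXB sXB) /negbTE.
  rewrite h5 cards0 in h4; rewrite /Sset; lia.
have lnq : 0 < ln (INR #|A|).
  rewrite -ln_1; apply: ln_increasing; first lra.
  have : (1 < INR #|A|) by apply: lt_1_INR; apply/ltP.
  lra.
rewrite /L /T0 /c1 /rho /rD mult_INR !INR_expn.
have hq : 0 < INR #|A| by apply: lt_0_INR; apply/ltP; rewrite (ltnW q1).
rewrite /Rdiv ln_mult ?ln_Rinv ?ln_mult ?ln_pow; try apply: pow_lt => //;
  try apply: Rmult_lt_0_compat; try apply: Rinv_0_lt_compat; try apply: pow_lt => //.
rewrite !minus_INR; try by apply/leP. rewrite INR_addn.
have e2 : INR #|Sset B X Y| = INR n - INR #|Y :\: (B :|: X)| - INR #|B| - INR #|X|.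
  by have := f_equal INR ecard; rewrite !INR_addn => h; lra.
rewrite e2 kB; field; try lra.
all: lra.
Qed.

Lemma main_sec : cond_entropy phi C B X Y =
    Rminus (Rminus (Rminus (INR n) (INR k)) (INR #|X|)) (rho C B X Y).
Proof. by rewrite entropy_L L_val. Qed.

End Real.

End RealAll.

Theorem mainTheorem10 (A : finType) (n k : nat) (C : {set {ffun 'I_n -> A}})
  (B : {set 'I_n}) (phi : A -> A -> A) (X Y : {set 'I_n}) :
  1 < #|A| ->
  almost_affine k C ->
  is_basis C B ->
  (forall y : A, bijective (phi y)) ->
  (forall y : A, bijective (fun x => phi x y)) ->
  X \subset ~: B ->
  cond_entropy phi C B X Y =
    Rminus (Rminus (Rminus (INR n) (INR k)) (INR #|X|)) (rho C B X Y).
Proof.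
move=> q1 Haa Hbas Hphi1 Hphi2 sXB.
exact: main_sec.
Qed.
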